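(* Let $m$ be a positive integer, let $\mathcal{N}_r$ be the gadget of size $m$, and let $\pi$ be an $\mathcal{H}^{(\ast)}$-partition of $\mathcal{N}_r$. Then for every $P\in\pi$, the Hamiltonian path of the induced subgraph $\mathcal{N}_r[P]$ has either all its arcs in $\swarrow_r$ or all its arcs in $\searrow_r$.
   Context: The gadget $\mathcal{N}_r=\langle\mathcal{V}_r,\mathcal{E}_r\rangle$ of size $m$ has vertex set $\mathcal{V}_r=\{r_{i,j}:0\le i,j\le m\}$ and arc set $\mathcal{E}_r=\swarrow_r\cup\searrow_r$, where $\swarrow_r=\{\langle r_{i,j},r_{i,j+1}\rangle:0\le i\le m,\ 0\le j<m\}$ and $\searrow_r=\{\langle r_{i,j},r_{i+1,j}\rangle:0\le i<m,\ 0\le j\le m\}$; it is a DAG. For a digraph $G$ and a subset $V_1$ of its vertices, $G[V_1]$ is the induced subgraph. A partition $\pi$ of the vertex set of a DAG $G$ is an $\mathcal{H}^{(\ast)}$-partition if every induced subgraph $G[P]$, $P\in\pi$, has a directed Hamiltonian path (which in a DAG is unique) and the quotient digraph $G/\pi$ (vertex set $\pi$, arc $\langle P,Q\rangle$ for $P\ne Q$ whenever some arc of $G$ goes from $P$ to $Q$) is acyclic. *)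

(* Defs.v *)
From mathcomp Require Import all_boot.
Set Implicit Arguments. Unset Strict Implicit. Unset Printing Implicit Defensive.

(* Gadget N_r of size m: vertices r_{i,j}, 0 <= i,j <= m, encoded as pairs (i,j). *)
Definition gvert (m : nat) := ('I_m.+1 * 'I_m.+1)%type.

Definition sw_arc (m : nat) : rel (gvert m) :=
  fun x y => (x.1 == y.1) && (val y.2 == (val x.2).+1).
Definition se_arc (m : nat) : rel (gvert m) :=
  fun x y => (val y.1 == (val x.1).+1) && (x.2 == y.2).
Definition gadget_arc (m : nat) : rel (gvert m) :=
  fun x y => sw_arc x y || se_arc x y.

Definition ham_path (V : finType) (E : rel V) (P : {set V}) (s : seq V) : Prop :=
  [/\ uniq s, s =i P & sorted E s].

Definition quot_arc (V : finType) (E : rel V) (pi : {set {set V}}) : rel {set V} :=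
  fun P Q => [&& P \in pi, Q \in pi, P != Q &
              [exists x in P, exists y in Q, E x y]].

Definition quot_acyclic (V : finType) (E : rel V) (pi : {set {set V}}) : Prop :=
  forall P Q, quot_arc E pi P Q -> ~~ connect (quot_arc E pi) Q P.

Definition Hstar_partition (V : finType) (E : rel V) (pi : {set {set V}}) : Prop :=
  [/\ partition pi [set: V],
      (forall P, P \in pi -> exists s, ham_path E P s)
    & quot_acyclic E pi].

(* Main.v *)
Require Import Defs.
From mathcomp Require Import all_boot.
Set Implicit Arguments. Unset Strict Implicit. Unset Printing Implicit Defensive.

Lemma corner (V : finType) (E : rel V) (pi : {set {set V}}) P a b w :
  Hstar_partition E pi -> P \in pi -> a \in P -> b \in P -> w \notin P ->
  E a w -> E w b -> False.
Proof.
case=> /and3P[/eqP Hcov _ _] _ Hac HP aP bP wP Eaw Ewb.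
have : w \in cover pi by rewrite Hcov inE.
case/bigcupP=> Q HQ wQ.
have PQ : P != Q by apply/eqP=> PQ; move: wP; rewrite PQ wQ.
have H1 : quot_arc E pi P Q.
  by rewrite /quot_arc HP HQ PQ /=; apply/existsP; exists a; rewrite aP /=;
     apply/existsP; exists w; rewrite wQ Eaw.
have H2 : quot_arc E pi Q P.
  by rewrite /quot_arc HP HQ eq_sym PQ /=; apply/existsP; exists w; rewrite wQ /=;
     apply/existsP; exists b; rewrite bP Ewb.
by move: (Hac _ _ H1); rewrite (connect1 H2).
Qed.

Definition lev m (v : gvert m) := val v.1 + val v.2.

Lemma lev_arc m (a b : gvert m) : gadget_arc a b -> lev b = (lev a).+1.
Proof.
rewrite /gadget_arc /sw_arc /se_arc /lev.
case/orP=> /andP[/eqP h1 /eqP h2].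
  by rewrite h1 h2 addnS.
by rewrite h1 h2.
Qed.

Lemma pairwise_mem (T : eqType) (r : rel T) s x y :
  pairwise r s -> x \in s -> y \in s -> x = y \/ r x y \/ r y x.
Proof.
elim: s => //= c s IH /andP[/allP Ha Hp].
rewrite !inE => /orP[/eqP->|xs] /orP[/eqP->|ys]; first by left.
- by right; left; apply: Ha.
- by right; right; apply: Ha.
- by apply: IH.
Qed.

Lemma nobend m (s : seq (gvert m)) :
  sorted (@gadget_arc m) s ->
  (forall x y z, x \in s -> y \in s -> z \in s ->
     ~~ ((sw_arc x y && se_arc y z) || (se_arc x y && sw_arc y z))) ->
  sorted (@sw_arc m) s \/ sorted (@se_arc m) s.
Proof.
elim: s => [|x s IH] //=; first by left.
case: s IH => [|y t] IH /=; first by left.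
case/andP=> Exy Hp Hb.
have Hb' : forall a b c, a \in y :: t -> b \in y :: t -> c \in y :: t ->
     ~~ ((sw_arc a b && se_arc b c) || (se_arc a b && sw_arc b c)).
  by move=> a b c ha hb hc; apply: Hb; rewrite inE ?ha ?hb ?hc orbT.
case: (IH Hp Hb') => /= Ht; case/orP: Exy => Exy.
- by left; rewrite Exy Ht.
- case: t Hb Hb' Ht {IH Hp} => [|z t] Hb Hb' Ht; first by right; rewrite Exy.
  move: Ht => /= /andP[Eyz _].
  have := Hb x y z; rewrite !inE !eqxx !(orTb, orbT) => /(_ isT isT isT).
  by rewrite Eyz Exy ?orbT.
- case: t Hb Hb' Ht {IH Hp} => [|z t] Hb Hb' Ht; first by left; rewrite Exy.
  move: Ht => /= /andP[Eyz _].
  have := Hb x y z; rewrite !inE !eqxx !(orTb, orbT) => /(_ isT isT isT).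
  by rewrite Eyz Exy ?orbT.
- by right; rewrite Exy Ht.
Qed.

Theorem lemma5p2 (m : nat) (Hm : 0 < m) (pi : {set {set gvert m}}) :
  Hstar_partition (@gadget_arc m) pi ->
  forall P, P \in pi ->
  forall s, ham_path (@gadget_arc m) P s ->
  sorted (@sw_arc m) s \/ sorted (@se_arc m) s.
Proof.
move=> Hpi P HP s [Hu Hs Hsort].
apply: nobend => // x y z xs ys zs.
have Hlt : pairwise (fun a b : gvert m => lev a < lev b) s.
  rewrite -sorted_pairwise; last by move=> a b c /ltn_trans; apply.
  apply: sub_sorted Hsort => a b /lev_arc ->; exact: ltnSn.
have xP : x \in P by rewrite -Hs.
have zP : z \in P by rewrite -Hs.
apply/negP; case/orP=> /andP[H1 H2].
- set w : gvert m := (z.1, x.2).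
  have wP : w \notin P.
    rewrite -Hs; apply/negP=> ws.
    move: H1 H2; rewrite /sw_arc /se_arc => /andP[/eqP e1 /eqP e2] /andP[/eqP e3 /eqP e4].
    have wy : w <> y.
      move=> ew; have : val w.2 = val y.2 by rewrite ew.
      rewrite /w /= e2; exact: n_Sn.
    have ll : lev w = lev y by rewrite /lev /w /= e3 e2 -e1 addnS.
    case: (pairwise_mem Hlt ws ys) => [//|[]] /= ; by rewrite ll ltnn.
  apply: (corner Hpi HP xP zP wP).
  + move: H1 H2; rewrite /gadget_arc /sw_arc /se_arc /=
      => /andP[/eqP e1 /eqP e2] /andP[/eqP e3 /eqP e4].
    by rewrite e3 -e1 eqxx eqxx orbT.
  + move: H1 H2; rewrite /gadget_arc /sw_arc /se_arc /=
      => /andP[/eqP e1 /eqP e2] /andP[/eqP e3 /eqP e4].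
    by rewrite -e4 e2 !eqxx.
- set w : gvert m := (x.1, z.2).
  have wP : w \notin P.
    rewrite -Hs; apply/negP=> ws.
    move: H1 H2; rewrite /sw_arc /se_arc => /andP[/eqP e1 /eqP e2] /andP[/eqP e3 /eqP e4].
    have wy : w <> y.
      move=> ew; have : val w.1 = val y.1 by rewrite ew.
      rewrite /w /= e1; exact: n_Sn.
    have ll : lev w = lev y by rewrite /lev /w /= e4 -e2 e1 addnS.
    case: (pairwise_mem Hlt ws ys) => [//|[]] /= ; by rewrite ll ltnn.
  apply: (corner Hpi HP xP zP wP).
  + move: H1 H2; rewrite /gadget_arc /sw_arc /se_arc /=
      => /andP[/eqP e1 /eqP e2] /andP[/eqP e3 /eqP e4].
    by rewrite e4 -e2 !eqxx.
  + move: H1 H2; rewrite /gadget_arc /sw_arc /se_arc /=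
      => /andP[/eqP e1 /eqP e2] /andP[/eqP e3 /eqP e4].
    by rewrite -e3 e1 !eqxx orbT.
Qed.
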